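(* Let $k\ge 2$ and $\ell_1\ge \ell_2\ge\cdots\ge \ell_k\ge 0$ be integers, let $B=B(\ell_1,\dots,\ell_k)$ and $n=2k+\sum_{i=1}^k\ell_i$. Then for every integer $t\ge 1$, \[(t-1)(k+\ell_1)+n+k(k-2)\le \hat r(tK_2,B)\le n+(t-1)\ell_1+(k+t-1)^2-2k.\]
   Context: All graphs are finite and simple. For integers $k\ge 2$ and $\ell_1\ge\cdots\ge\ell_k\ge0$, $B(\ell_1,\dots,\ell_k)$ is the graph obtained from the complete bipartite graph $K_{k,k}$ by attaching $\ell_i$ pendant edges (each to a new leaf vertex) to the $i$-th vertex of one fixed part of the bipartition, for $i=1,\dots,k$. $tK_2$ is a matching with $t$ edges. For graphs $F,G,H$, $F\to(G,H)$ means every red--blue coloring of $E(F)$ contains a red copy of $G$ or a blue copy of $H$, and $\hat r(G,H)=\min\{|E(F)|:F\to(G,H)\}$. *)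

(* Defs.v *)
From mathcomp Require Import all_boot.
Set Implicit Arguments. Unset Strict Implicit. Unset Printing Implicit Defensive.

Definition simple_graph (V : finType) (e : rel V) : Prop :=
  (forall u v, e u v = e v u) /\ (forall v, ~~ e v v).

Definition edge_set (V : finType) (e : rel V) : {set {set V}} :=
  [set E : {set V} | [exists u, exists v, e u v && (E == [set u; v])]].

Definition nedges (V : finType) (e : rel V) : nat := #|edge_set e|.

Definition has_copy (W : finType) (g : rel W) (V : finType) (h : rel V) : Prop :=
  exists f : W -> V, injective f /\ forall u v, g u v -> h (f u) (f v).

(* A red-blue colouring of E(F) is a map c from unordered pairs to bool
   (true = red, false = blue); only its values on edges matter. *)
Definition red_part (V : finType) (e : rel V) (c : {set V} -> bool) : rel V :=
  fun u v => e u v && c [set u; v].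
Definition blue_part (V : finType) (e : rel V) (c : {set V} -> bool) : rel V :=
  fun u v => e u v && ~~ c [set u; v].

Definition arrows (V : finType) (e : rel V)
  (W1 : finType) (g : rel W1) (W2 : finType) (h : rel W2) : Prop :=
  forall c : {set V} -> bool, has_copy g (red_part e c) \/ has_copy h (blue_part e c).

(* tK_2: vertices (i, b), edge iff same i and different b. *)
Definition matching_rel (t : nat) : rel ('I_t * bool) :=
  fun x y => (x.1 == y.1) && (x.2 != y.2).

(* B(l_0, ..., l_{k-1}): K_{k,k} with parts inl (inl i) ("fixed part") and
   inl (inr j), plus l i pendant leaves (inr (existT i a)) at inl (inl i). *)
Definition Bvert (k : nat) (l : nat -> nat) : finType :=
  ('I_k + 'I_k + {i : 'I_k & 'I_(l i)})%type.

Definition Bbase (k : nat) (l : nat -> nat) (x y : Bvert k l) : bool :=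
  match x, y with
  | inl (inl _), inl (inr _) => true
  | inl (inl i), inr p => tag p == i
  | _, _ => false
  end.

Definition B_rel (k : nat) (l : nat -> nat) : rel (Bvert k l) :=
  fun x y => Bbase x y || Bbase y x.
Arguments matching_rel t : clear implicits.
Arguments B_rel k l : clear implicits.

(* Main.v *)
Require Import Defs.
From mathcomp Require Import all_boot zify.
Set Implicit Arguments. Unset Strict Implicit. Unset Printing Implicit Defensive.

Lemma nedges_copy (W V : finType) (g : rel W) (h : rel V) :
  has_copy g h -> nedges g <= nedges h.
Proof.
case=> f [injf hf]; rewrite /nedges.
rewrite -(card_imset _ (imset_inj injf)).
apply: subset_leq_card; apply/subsetP => E /imsetP [D].
rewrite inE => /existsP [u /existsP [v /andP [guv /eqP ->]]] ->.
rewrite inE; apply/existsP; exists (f u); apply/existsP; exists (f v).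
by rewrite hf //= imsetU !imset_set1.
Qed.

Section BE.
Variables (k : nat) (l : nat -> nat).

Definition Bedge (x : ('I_k * 'I_k) + {i : 'I_k & 'I_(l i)}) : {set Bvert k l} :=
  match x with
  | inl (i, j) => [set inl (inl i); inl (inr j)]
  | inr p => [set inl (inl (tag p)); inr p]
  end.

Lemma Bedge_inj : injective Bedge.
Proof.
move=> [[i j]|p] [[i' j']|p'] /= /setP H.
- have := H (inl (inl i)); have := H (inl (inr j)); rewrite !inE /=.
  rewrite !eqxx /= ?orbF ?orFb.
  by move=> /esym/eqP [->] /esym/eqP [->].
- by have := H (inl (inr j)); rewrite !inE /= eqxx.
- by have := H (inr p); rewrite !inE /= eqxx.
- by have := H (inr p); rewrite !inE /= eqxx /= => /esym/eqP [->].
Qed.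

Lemma edge_setB : edge_set (B_rel k l) = Bedge @: setT.
Proof.
apply/setP => E; rewrite inE; apply/existsP/imsetP.
- case=> u /existsP [v /andP [+ /eqP ->]].
  rewrite /B_rel => /orP [].
  + case: u => [[i|i]|p] //; case: v => [[j|j]|q] //= => [_|/eqP <-].
      by exists (inl (i, j)); rewrite ?inE.
    by exists (inr q); rewrite ?inE.
  + case: v => [[i|i]|p] //; case: u => [[j|j]|q] //= => [_|/eqP <-].
      by exists (inl (i, j)); rewrite ?inE // setUC.
    by exists (inr q); rewrite ?inE // setUC.
- case=> [[[i j]|p]] _ ->.
  + by exists (inl (inl i)); apply/existsP; exists (inl (inr j)); rewrite /B_rel /= eqxx.
  + exists (inl (inl (tag p))); apply/existsP; exists (inr p).
    by rewrite /B_rel /= !eqxx.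
Qed.

Lemma nedgesB : nedges (B_rel k l) = k * k + \sum_(i < k) l i.
Proof.
rewrite /nedges edge_setB card_imset ?cardsT; last exact: Bedge_inj.
rewrite card_sum card_prod card_tagged !card_ord sumnE big_map big_enum /=.
by under eq_bigr do rewrite card_ord.
Qed.
End BE.

Definition deg (V : finType) (e : rel V) v := #|[set u | e v u]|.

Lemma has_copy_mono (W V : finType) (g : rel W) (h h' : rel V) :
  has_copy g h -> (forall u v, h u v -> h' u v) -> has_copy g h'.
Proof. by case=> f [fi fh] hh; exists f; split=> // u v /fh /hh. Qed.

Section Sub.
Variables (V : finType) (v : V).
Definition V' := {x : V | x != v}.
Lemma preim2 (a b : V') : [set z : V' | val z \in [set val a; val b]] = [set a; b].
Proof. by apply/setP => z; rewrite !inE !val_eqE. Qed.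

Lemma nedges_split (e : rel V) : simple_graph e ->
  nedges e = deg e v + nedges (fun x y : V' => e (val x) (val y)).
Proof.
case=> esy eirr; rewrite /nedges /deg.
set e' := (fun x y : V' => e (val x) (val y)).
have -> : edge_set e = [set E in edge_set e | v \in E] :|: [set E in edge_set e | v \notin E].
  by apply/setP => E; rewrite !inE; case: (v \in E); rewrite ?andbT ?andbF ?orbF.
rewrite cardsU.
have -> : [set E in edge_set e | v \in E] :&: [set E in edge_set e | v \notin E] = set0.
  by apply/setP => E; rewrite !inE; case: (v \in E); rewrite ?andbT ?andbF.
rewrite cards0 subn0; congr (_ + _).
- have -> : [set E in edge_set e | v \in E] = (fun u => [set v; u]) @: [set u | e v u].
    apply/setP => E; rewrite !inE; apply/andP/imsetP.
    + case=> /existsP [a /existsP [b /andP [eab /eqP ->]]].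
      rewrite !inE => /orP [] /eqP ?; subst.
        by exists b; rewrite ?inE.
      by exists a; rewrite ?inE 1?esy // setUC.
    + case=> u; rewrite inE => evu ->; split; last by rewrite !inE eqxx.
      by apply/existsP; exists v; apply/existsP; exists u; rewrite evu eqxx.
  apply: card_in_imset => a b; rewrite !inE => ea eb /setP H.
  have := H a; rewrite !inE eqxx orbT => /esym/orP [] /eqP // av.
  by move: ea; rewrite av (negbTE (eirr v)).
- have -> : [set E in edge_set e | v \notin E] = (fun E' : {set V'} => [set val x | x in E']) @: edge_set e'.
    apply/setP => E; rewrite !inE; apply/andP/imsetP.
    + case=> /existsP [a /existsP [b /andP [eab /eqP ->]]].
      rewrite !inE negb_or => /andP [va vb].
      have va' : a != v by rewrite eq_sym.
      have vb' : b != v by rewrite eq_sym.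
      exists [set (exist _ a va' : V'); exist _ b vb'].
        by rewrite inE; apply/existsP; exists (exist _ a va'); apply/existsP; exists (exist _ b vb'); rewrite eqxx andbT.
      by rewrite imsetU !imset_set1.
    + case=> E'; rewrite inE => /existsP [a /existsP [b /andP [eab /eqP ->]]] ->.
      rewrite imsetU !imset_set1; split.
        by apply/existsP; exists (val a); apply/existsP; exists (val b); rewrite [e _ _]eab eqxx.
      by rewrite !inE negb_or ![v == _]eq_sym (valP a) (valP b).
  by rewrite card_imset //; apply: imset_inj; apply: val_inj.
Qed.
End Sub.

Section LB.
Variables (k : nat) (l : nat -> nat) (k0 : 0 < k).
Let o : 'I_k := Ordinal k0.

Lemma B_nbr (x : Bvert k l) : exists y, B_rel k l x y.
Proof.
case: x => [[i|i]|p].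
- by exists (inl (inr i)).
- by exists (inl (inl i)).
- by exists (inl (inl (tag p))); rewrite /B_rel /= eqxx.
Qed.

Lemma deg_copy (V : finType) (e : rel V) (f : Bvert k l -> V) :
  injective f -> (forall x y, B_rel k l x y -> e (f x) (f y)) ->
  forall i0 : 'I_k, k + l i0 <= deg e (f (inl (inl i0))).
Proof.
move=> fi fe i0; rewrite /deg.
pose h (z : 'I_k + 'I_(l i0)) : V :=
  match z with inl j => f (inl (inr j)) | inr a => f (inr (existT _ i0 a)) end.
have hi : injective h.
  move=> [j|a] [j'|a'] /= /fi // [].
  - by move=> ->.
  - by move=> /eqP; rewrite eq_Tagged /= => /eqP ->.
have <- : #|{: 'I_k + 'I_(l i0)}| = k + l i0 by rewrite card_sum !card_ord.
rewrite -(card_imset _ hi); apply: subset_leq_card; apply/subsetP => u /imsetP [z _ ->].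
rewrite inE; case: z => [j|a] /=; apply: fe => //.
by rewrite /B_rel /= eqxx.
Qed.

Lemma all_blue (V : finType) (e : rel V) t :
  arrows e (matching_rel t.+1) (B_rel k l) ->
  exists f : Bvert k l -> V, injective f /\ forall x y, B_rel k l x y -> e (f x) (f y).
Proof.
move/(_ (fun _ => false)) => [[g [_ gh]]|[f [fi fh]]].
- have := gh (ord0, false) (ord0, true); rewrite /matching_rel /red_part /= andbF.
  by move=> /(_ isT).
- by exists f; split=> // x y /fh /andP [].
Qed.

End LB.

Section LB2.
Variables (k : nat) (l : nat -> nat) (k0 : 0 < k).

Lemma arrows_del (V : finType) (e : rel V) (v : V) t :
  arrows e (matching_rel t.+2) (B_rel k l) ->
  arrows (fun x y : V' v => e (val x) (val y)) (matching_rel t.+1) (B_rel k l).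
Proof.
move=> H c'.
pose c (E : {set V}) := (v \in E) || c' [set z : V' v | val z \in E].
case: (H c) => [[g [gi gh]]|[f [fi fh]]]; [left|right].
- pose P i := (g (i, false) == v) || (g (i, true) == v).
  pose i0 := odflt ord_max [pick i | P i].
  have Hi0 : forall i b, g (i, b) = v -> i = i0.
    move=> i b giv; rewrite /i0; case: pickP => [i1 /orP Pi1|/(_ i)].
      have [b1 gb1] : exists b1, g (i1, b1) = v by case: Pi1 => /eqP; eauto.
      by have [] := gi _ _ (etrans giv (esym gb1)).
    by rewrite /P; case: b giv => ->; rewrite eqxx ?orbT.
  have gv : forall i b, g (lift i0 i, b) != v.
    by move=> i b; apply/eqP => /Hi0 /eqP; rewrite eq_sym (negbTE (neq_lift _ _)).
  exists (fun ib => exist _ (g (lift i0 ib.1, ib.2)) (gv ib.1 ib.2) : V' v); split.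
    move=> [i b] [i' b'] /(congr1 val) /= /gi E.
    by move: (congr1 snd E) => /= ->; rewrite (lift_inj (congr1 fst E)).
  move=> [i b] [i' b'] /= mib.
  have := gh (lift i0 i, b) (lift i0 i', b').
  move: mib; rewrite /matching_rel /red_part /= => /andP [/eqP -> ->].
  rewrite eqxx => /(_ isT) /andP [-> /orP []] //=.
  by rewrite !inE !(eq_sym v) (negbTE (gv _ _)) (negbTE (gv _ _)).
  by rewrite -preim2.
- have fv : forall x, f x != v.
    move=> x; have [y /fh] := B_nbr x.
    by rewrite /blue_part /c !inE => /andP [_]; rewrite !negb_or eq_sym => /andP [/andP [+ _] _].
  exists (fun x => exist _ (f x) (fv x) : V' v); split.
    by move=> x y /(congr1 val) /fi.
  move=> x y /fh; rewrite /blue_part /c /= negb_or => /andP [-> /andP [_]].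
  by rewrite -preim2.
Qed.

End LB2.

Section LB3.
Variables (k : nat) (l : nat -> nat) (k0 : 0 < k).

Lemma LB t : forall (V : finType) (e : rel V), simple_graph e ->
  arrows e (matching_rel t.+1) (B_rel k l) ->
  t * (k + l 0) + nedges (B_rel k l) <= nedges e.
Proof.
elim: t => [|t IH] V e se H.
  have [f [fi fh]] := all_blue H.
  by rewrite mul0n add0n; apply: nedges_copy; exists f.
have [f [fi fh]] := all_blue H.
have dw := deg_copy fi fh (Ordinal k0).
case: (@arg_maxnP _ (f (inl (inl (Ordinal k0)))) xpredT (deg e) isT) => v _ vmax.
have dv : k + l 0 <= deg e v by apply: leq_trans dw (vmax _ isT).
have se' : simple_graph (fun x y : V' v => e (val x) (val y)).
  by case: se => s1 s2; split=> [x y|x]; [apply: s1|apply: s2].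
have := IH _ _ se' (arrows_del H).
rewrite (nedges_split v se) mulSn; lia.
Qed.
End LB3.

Definition avoid (S : seq nat) (K i : nat) := nth 0 [seq x <- iota 0 K | x \notin S] i.

Lemma nth_filter_iota (P : pred nat) n : forall m i,
  i < size [seq x <- iota m n | P x] ->
  nth 0 [seq x <- iota m n | P x] i <= m + i + count (predC P) (iota m n).
Proof.
elim: n => [|n IH] m i //=.
case: (boolP (P m)) => Pm /=.
- case: i => [|i] /=; first by lia.
  by move=> /IH; lia.
- by move=> /IH; lia.
Qed.

Lemma size_avoid S K : K - size S <= size [seq x <- iota 0 K | x \notin S].
Proof.
have : count (mem S) (iota 0 K) <= size S.
  rewrite -size_filter; apply: uniq_leq_size; first by rewrite filter_uniq // iota_uniq.
  by move=> x; rewrite mem_filter => /andP [].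
have := count_predC (mem S) (iota 0 K); rewrite size_iota size_filter.
have -> : count (fun x => x \notin S) (iota 0 K) = count (predC (mem S)) (iota 0 K) by [].
lia.
Qed.

Lemma avoidP S K i : i + size S < K ->
  [/\ avoid S K i < K, avoid S K i \notin S & avoid S K i <= i + size S].
Proof.
move=> H.
have Hi : i < size [seq x <- iota 0 K | x \notin S].
  by apply: leq_trans (size_avoid S K); rewrite ltn_subRL addnC.
have := mem_nth 0 Hi; rewrite mem_filter mem_iota /avoid => /andP [-> /andP [_ ->]].
split=> //.
have := @nth_filter_iota (fun x => x \notin S) K 0 i Hi.
have : count (predC (fun x => x \notin S)) (iota 0 K) <= size S.
  have -> : count (predC (fun x => x \notin S)) (iota 0 K) = count (mem S) (iota 0 K).
    by apply: eq_count => x /=; rewrite negbK.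
  rewrite -size_filter; apply: uniq_leq_size; first by rewrite filter_uniq // iota_uniq.
  by move=> x; rewrite mem_filter => /andP [].
by move=> h1 h2; apply: leq_trans h2 _; rewrite add0n leq_add2l; exact: h1.
Qed.

Lemma avoid_inj S K i j : i + size S < K -> j + size S < K -> avoid S K i = avoid S K j -> i = j.
Proof.
move=> Hi Hj; have Hs := size_avoid S K.
move/eqP; rewrite /avoid nth_uniq ?filter_uniq ?iota_uniq //; first by move/eqP.
  by apply: leq_trans _ Hs; rewrite ltn_subRL addnC.
by apply: leq_trans _ Hs; rewrite ltn_subRL addnC.
Qed.

Lemma avoid_lt S K i : i + size S < K -> avoid S K i < K.
Proof. by case/avoidP. Qed.
Lemma avoid_notin S K i : i + size S < K -> avoid S K i \notin S.
Proof. by case/avoidP. Qed.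
Lemma avoid_le S K i : i + size S < K -> avoid S K i <= i + size S.
Proof. by case/avoidP. Qed.

Section UB.
Variables (k : nat) (l : nat -> nat) (s : nat) (k0 : 0 < k).
Hypothesis lmon : forall i j, i <= j < k -> l j <= l i.
Let K := k + s.
Let L := fun x => l (x - s).
Variable c : {set Bvert K L} -> bool.

Definition okp (p : 'I_K * Bvert K L) :=
  Bbase (inl (inl p.1)) p.2 && c [set inl (inl p.1); p.2].

Definition valid (ms : seq ('I_K * Bvert K L)) :=
  [&& all okp ms, uniq (map fst ms) & uniq (map snd ms)].

Lemma K0 : 0 < K. Proof. rewrite /K; lia. Qed.

Lemma red_copy ms : valid ms -> has_copy (matching_rel (size ms)) (red_part (B_rel K L) c).
Proof.
case/and3P => /allP aok u1 u2.
pose d : 'I_K * Bvert K L := (Ordinal K0, inl (inl (Ordinal K0))).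
pose g (ib : 'I_(size ms) * bool) : Bvert K L :=
  if ib.2 then (nth d ms ib.1).2 else inl (inl (nth d ms ib.1).1).
have okn : forall i : 'I_(size ms), okp (nth d ms i) by move=> i; apply: aok; apply: mem_nth.
exists g; split.
- move=> [i b] [i' b']; rewrite /g /=.
  case: b; case: b' => /=.
  + move=> E; have : nth (d.2) (map snd ms) i == nth (d.2) (map snd ms) i'.
      by rewrite !(nth_map d) // E.
    by rewrite nth_uniq ?size_map // => /eqP /val_inj ->.
  + by move=> E; have := okn i; rewrite /okp E.
  + by move=> E; have := okn i'; rewrite /okp -E.
  + move=> [E]; have : nth (d.1) (map fst ms) i == nth (d.1) (map fst ms) i'.
      by rewrite !(nth_map d) // E.
    by rewrite nth_uniq ?size_map // => /eqP /val_inj ->.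
- move=> [i b] [i' b']; rewrite /matching_rel /= => /andP [/eqP <-].
  have := okn i; rewrite /okp /red_part /B_rel /g => /andP [h1 h2].
  case: b; case: b' => //= _; move: h1 h2 => /= h1 h2; rewrite ?h1 ?orbT ?h2 //=. all: try by rewrite setUC h2.
Qed.

Lemma blue_copy ms : valid ms -> size ms <= s ->
  (forall x z, Bbase (inl (inl x)) z -> x \notin map fst ms -> z \notin map snd ms ->
     ~~ c [set inl (inl x); z]) ->
  has_copy (B_rel k l) (blue_part (B_rel K L) c).
Proof.
case/and3P => /allP aok u1 u2 sz maxi.
pose Sx := map val (map fst ms).
pose getY (z : Bvert K L) := if z is inl (inr y) then Some (val y) else None.
pose Sy := pmap getY (map snd ms).
have szx : size Sx <= s by rewrite !size_map.
have szy : size Sy <= s.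
  by rewrite size_pmap; apply: leq_trans (count_size _ _) _; rewrite size_map.
have hx : forall i : 'I_k, i + size Sx < K by move=> i; have := ltn_ord i; rewrite /K; lia.
have hy : forall i : 'I_k, i + size Sy < K by move=> i; have := ltn_ord i; rewrite /K; lia.
pose phi (i : 'I_k) : 'I_K := Ordinal (avoid_lt (hx i)).
pose psi (j : 'I_k) : 'I_K := Ordinal (avoid_lt (hy j)).
have Lphi : forall i : 'I_k, l i <= L (phi i).
  move=> i; rewrite /L; apply: lmon; have := avoid_le (hx i); have := ltn_ord i.
  rewrite /phi /=; lia.
have phii : injective phi.
  by move=> i j /(congr1 val) /= /(avoid_inj (hx i) (hx j)) /val_inj.
have psii : injective psi.
  by move=> i j /(congr1 val) /= /(avoid_inj (hy i) (hy j)) /val_inj.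
have phin : forall i, phi i \notin map fst ms.
  move=> i; apply/negP => /(map_f val); apply/negP.
  exact: (avoid_notin (hx i)).
have psin : forall j, (inl (inr (psi j)) : Bvert K L) \notin map snd ms.
  move=> j; apply/negP => /(map_f getY) => H; have := avoid_notin (hy j).
  by rewrite -/(val (psi j)) mem_pmap H.
pose f (x : Bvert k l) : Bvert K L :=
  match x with
  | inl (inl i) => inl (inl (phi i))
  | inl (inr j) => inl (inr (psi j))
  | inr (existT i a) =>
      inr (existT (fun x : 'I_K => 'I_(L x)) (phi i) (Ordinal (leq_trans (ltn_ord a) (Lphi i))))
  end.
have bsym : forall u v, blue_part (B_rel K L) c u v = blue_part (B_rel K L) c v u.
  by move=> u v; rewrite /blue_part /B_rel orbC setUC.
have key : forall x y, Bbase x y -> blue_part (B_rel K L) c (f x) (f y).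
  move=> [[i|i]|p] [[j|j]|q] //=.
  - by move=> _; rewrite /blue_part /B_rel /= maxi.
  - case: q => i' a /= /eqP Ei; subst i'.
    rewrite /blue_part /B_rel /= eqxx /=; apply: maxi => //=.
    apply/negP => /mapP [p' p'in Ez].
    have := aok _ p'in; rewrite /okp -Ez /= => /andP [/eqP Ep _].
    by have := phin i; rewrite Ep (map_f _ p'in).
exists f; split.
- move=> [[i|i]|[i a]] [[j|j]|[j b]] //=.
  + move=> /(congr1 (fun z : Bvert K L => if z is inl (inl u) then val u else 0)) /=.
    by move=> /(avoid_inj (hx i) (hx j)) /val_inj ->.
  + move=> /(congr1 (fun z : Bvert K L => if z is inl (inr u) then val u else 0)) /=.
    by move=> /(avoid_inj (hy i) (hy j)) /val_inj ->.
  + move=> /(congr1 (fun z : Bvert K L => if z is inr p then (val (tag p), val (tagged p)) else (0, 0))) /=.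
    case=> /(avoid_inj (hx i) (hx j)) /val_inj Eij Eab; subst j; congr (inr (existT _ _ _)).
    exact: val_inj.
- move=> x y; rewrite /B_rel => /orP [/key //|/key]; by rewrite bsym.
Qed.

Lemma claim n : forall ms, valid ms -> size ms + n = s.+1 ->
  has_copy (matching_rel s.+1) (red_part (B_rel K L) c) \/
  has_copy (B_rel k l) (blue_part (B_rel K L) c).
Proof.
elim: n => [|n IH] ms vms sz.
  by left; rewrite -sz addn0; apply: red_copy.
case: (boolP [exists x, exists z, [&& Bbase (inl (inl x)) z, x \notin map fst ms,
                 z \notin map snd ms & c [set inl (inl x); z]]]).
- move=> /existsP [x /existsP [z /and4P [bz xn zn cz]]].
  apply: (IH ((x, z) :: ms)); last by rewrite /= addSnnS.
  case/and3P: vms => a1 a2 a3.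
  rewrite /valid !map_cons !cons_uniq a2 a3 xn zn /= a1 andbT.
  by rewrite /okp bz cz.
- move=> nex; right; apply: (blue_copy vms); first by move: sz; lia.
  move=> x z bz xn zn; apply/negP => cz; move/negP: nex; apply.
  by apply/existsP; exists x; apply/existsP; exists z; rewrite bz xn zn cz.
Qed.
End UB.

Lemma UB_arrows k l s : 0 < k -> (forall i j, i <= j < k -> l j <= l i) ->
  arrows (B_rel (k + s) (fun x => l (x - s))) (matching_rel s.+1) (B_rel k l).
Proof.
move=> k0 lmon c; apply: (@claim k l s k0 lmon c s.+1 [::]) => //.
Qed.
Unset Implicit Arguments.

Lemma sumL k l s : \sum_(x < k + s) l (x - s) = s * l 0 + \sum_(i < k) l i.
Proof.
rewrite -(big_mkord xpredT (fun x => l (x - s))) (big_cat_nat _ (n := s)) //=; last by lia.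
rewrite (eq_big_nat _ _ (F2 := fun _ => l 0)); last by move=> i /andP [_ h]; congr l; lia.
rewrite sum_nat_const_nat subn0; congr (_ + _).
rewrite -{1}(add0n s) big_addn addnK -(big_mkord xpredT).
by apply: eq_big_nat => i _; rewrite addnK.
Qed.

Theorem proposition3p3 (k : nat) (l : nat -> nat) (t : nat) :
  2 <= k ->
  (forall i j, i <= j < k -> l j <= l i) ->
  1 <= t ->
  let n := 2 * k + \sum_(i < k) l i in
  (forall (V : finType) (e : rel V), simple_graph e ->
     arrows e (matching_rel t) (B_rel k l) ->
     (t - 1) * (k + l 0) + n + k * (k - 2) <= nedges e)
  /\
  (exists (V : finType) (e : rel V), simple_graph e /\
     arrows e (matching_rel t) (B_rel k l) /\
     nedges e <= n + (t - 1) * l 0 + (k + t - 1) ^ 2 - 2 * k).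
Proof.
move=> k2 lmon; case: t => [//|s] _ n.
have k0 : 0 < k by lia.
have kk : 2 * k + k * (k - 2) = k * k.
  have [k' ->] : exists k', k = k'.+2 by exists (k - 2); lia.
  rewrite subSS ?subn0; nia.
split.
- move=> V e se H; have := LB k0 se H; rewrite nedgesB /n subSS subn0.
  lia.
- exists (Bvert (k + s) (fun x => l (x - s))), (B_rel (k + s) (fun x => l (x - s))).
  split; last split.
  + split=> [u v|v]; first by rewrite /B_rel orbC.
    by case: v => [[i|i]|p].
  + exact: UB_arrows.
    rewrite nedgesB sumL /n subSS subn0 addnS subSS subn0 -mulnn.
    lia.
Qed.
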